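(* In the setting described in the context: (i) if $\mathcal B'\in M_{r+1}(\mathbb Z)$ satisfies $\mathcal A\mathcal B'=nI_{r+1}$, then $t$ divides $n$; (ii) consequently, if $(\alpha'_0,\dots,\alpha'_r)\in L^{r+1}$ satisfies $au_j(\alpha'_j)=n>0$ for all $j$ and $au_k(\alpha'_j)=0$ for all $k\ne j$ (a uniform positive dual family to $(au_0,\dots,au_r)$), then $t$ divides $n$; (iii) the family $(\alpha_0,\dots,\alpha_r)$ has the property that for every prime $p$ there is an index $0\le j\le r$ such that $\alpha_j-n'h'\notin pL$ for all $n'\in\mathbb Z$.
   Context: Let $\mathbb K$ be a number field of degree $d=r+2\ge2$ with exactly one pair of complex conjugate embeddings; order its embeddings $\sigma_1,\dots,\sigma_r$ (real), $\sigma_{r+1}=\sigma_{\mathbb C}$, $\sigma_{r+2}=\overline{\sigma_{\mathbb C}}$. A $\mathbb Q$-basis $(e_0,\dots,e_{r+1})$ of $\mathbb K$ is positive if $i\cdot\det(\sigma_j(e_{k-1}))_{1\le j,k\le d}>0$. Let $\mathfrak f\ne\mathcal O_{\mathbb K}$ be an integral ideal, $q\mathbb Z=\mathfrak f\cap\mathbb Z$, $\mathfrak b$ an integral ideal coprime to $\mathfrak f$, $L=\mathfrak f\mathfrak b^{-1}$, $\mathfrak a$ an integral ideal coprime to $\mathfrak f\mathfrak b$ with $\mathfrak a^{-1}L/L$ cyclic, $N=\mathcal N(\mathfrak a)$. An element $h\in L$ is admissible if $h/q-1\in L$ and $h/N$ generates $\mathfrak a^{-1}L/L$. Let $\mathcal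 O^{+,\times}_{\mathfrak f}$ be the group of units $\equiv1\bmod\mathfrak f$ that are positive at all real embeddings. Let $u_1,\dots,u_r\in\mathcal O^{+,\times}_{\mathfrak f}$ be such that $1,u_1,\dots,u_r$ are $\mathbb Q$-linearly independent, and $u_0=1$. Let $h\in L$ be admissible, $h=mh'$ with $m\in\mathbb Z_{>0}$ and $h'$ primitive in $L$. Fix a positive $\mathbb Z$-basis $(e_0=h',e_1,\dots,e_{r+1})$ of $L$ with $u_jh'=\sum_{k=0}^jc_{jk0}e_k$, $c_{jk0}\in\mathbb Z$, $c_{jj0}>0$; put $\lambda=\prod_{j=1}^rc_{jj0}$ and let $a:L\to\mathbb Z$ be the linear form with $\lambda a=\det(h',u_1h',\dots,u_rh',\cdot)$ (determinant of coordinates in this basis). Write $au_j$ for $y\mapsto a(u_jy)$. Let $\mathcal A=(au_j(e_k))_{0\le j\le r,\,1\le k\le r+1}\in M_{r+1}(\mathbb Z)$, with elementary divisors $1=A_0\mid A_1\mid\dots\mid A_r$, and put $t=A_r$. Let $(b_{ij})_{1\le i\le r+1,0\le j\le r}=t\mathcal A^{-1}$ (an integer matrix) and $\alpha_j=\sum_{i=1}^{r+1}b_{ij}e_i\in L$, so that $au_k(\alpha_j)=t\delta_{jk}$ for all $0\le j,k\le r$. *)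

(* Defs.v *)
From HB Require Import structures.
From mathcomp Require Import all_boot all_order all_algebra all_field.
Set Implicit Arguments. Unset Strict Implicit. Unset Printing Implicit Defensive.
Import Order.TTheory GRing.Theory Num.Theory.
Local Open Scope ring_scope.

Section NF.
Variable K : fieldExtType rat.

Definition OK (x : K) : Prop :=
  exists p : {poly int}, p \is monic /\ root (map_poly (fun z : int => z%:~R) p) x.

(* (fractional) ideals are represented as subsets of K *)
Definition kset := K -> Prop.

Definition is_ideal (I : kset) : Prop :=
  (forall x, I x -> OK x) /\ I 0 /\ (forall x y, I x -> I y -> I (x - y)) /\
  (forall c x, OK c -> I x -> I (c * x)).

Definition int_ideal (I : kset) : Prop := is_ideal I /\ exists x, I x /\ x != 0.

Definition set_mul (I J : kset) : kset := fun z =>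
  exists s : seq (K * K), (forall p, p \in s -> I p.1 /\ J p.2) /\
                          z = \sum_(p <- s) p.1 * p.2.

Definition set_add (I J : kset) : kset := fun z => exists x y, I x /\ J y /\ z = x + y.

Definition set_inv (I : kset) : kset := fun x => forall y, I y -> OK (x * y).

Definition ideal_coprime (I J : kset) : Prop := forall x, OK x -> set_add I J x.

Definition generates_quot (M N : kset) (g : K) : Prop :=
  M g /\ forall x, M x -> exists z : int, N (x - z%:~R * g).

Definition cyclic_quot (M N : kset) : Prop := exists g, generates_quot M N g.

Definition ideal_norm (I : kset) (n : nat) : Prop :=
  exists s : seq K, size s = n /\ (forall x, x \in s -> OK x) /\
    (forall i j, (i < n)%N -> (j < n)%N -> I (nth 0 s i - nth 0 s j) -> i = j) /\
    (forall x, OK x -> exists2 i, (i < n)%N & I (x - nth 0 s i)).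

(* embeddings sigma_0..sigma_{r-1} real, sigma_r complex, sigma_{r+1} its conjugate,
   and these are all the embeddings K -> C, pairwise distinct *)
Definition one_complex_pair (r : nat) (sigma : 'I_(r.+2) -> {rmorphism K -> algC}) : Prop :=
  [/\ (forall i j, sigma i =1 sigma j -> i = j),
      (forall phi : {rmorphism K -> algC}, exists i, phi =1 sigma i),
      (forall i : 'I_(r.+2), (i < r)%N -> forall x, sigma i x \is Num.real),
      (exists x, sigma (inord r) x \isn't Num.real) &
      (forall x, sigma (inord r.+1) x = (sigma (inord r) x)^*)].

Definition positive_basis (r : nat) (sigma : 'I_(r.+2) -> {rmorphism K -> algC})
    (e : 'I_(r.+2) -> K) : Prop :=
  0 < 'i * \det (\matrix_(j, k) sigma j (e k)).

Definition zbasis (n : nat) (L : kset) (e : 'I_n -> K) : Prop :=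
  free [tuple e i | i < n] /\
  forall x, L x <-> exists z : 'I_n -> int, x = \sum_i (z i)%:~R * e i.

Definition primitive_in (L : kset) (x : K) : Prop :=
  L x /\ x != 0 /\ forall (k : int) y, L y -> x = k%:~R * y -> `|k| = 1.

Definition unit_plus_f (r : nat) (sigma : 'I_(r.+2) -> {rmorphism K -> algC})
    (f : kset) (u : K) : Prop :=
  [/\ u != 0, OK u, OK u^-1, f (u - 1) &
      forall i : 'I_(r.+2), (i < r)%N -> 0 < sigma i u].

(* admissible h (L = f b^{-1}, q, N = N(a)) *)
Definition admissible (L : kset) (q N : nat) (a : kset) (h : K) : Prop :=
  [/\ L h, L (h / q%:R - 1) & generates_quot (set_mul (set_inv a) L) L (h / N%:R)].

Definition lam (r : nat) (c : 'I_(r.+1) -> 'I_(r.+2) -> int) : int :=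
  \prod_(j < r.+1 | j != ord0) c j (widen_ord (leqnSn _) j).

Definition aform (r : nat) (e : 'I_(r.+2) -> K) (u : 'I_(r.+1) -> K) (h' : K)
    (c : 'I_(r.+1) -> 'I_(r.+2) -> int) (y : K) : rat :=
  let v := fun i : 'I_(r.+2) =>
    if unlift ord_max i is Some j then u j * h' else y in
  \det (\matrix_(i, k) coord [tuple e l | l < r.+2] k (v i)) / (lam c)%:~R.

Definition Amat (r : nat) (e : 'I_(r.+2) -> K) (u : 'I_(r.+1) -> K) (h' : K)
    (c : 'I_(r.+1) -> 'I_(r.+2) -> int) : 'M[rat]_(r.+1) :=
  \matrix_(j, k) aform e u h' c (u j * e (lift ord0 k)).

End NF.

Definition elem_divisors (n : nat) (A : 'M[rat]_n) (d : 'I_n -> int) : Prop :=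
  exists P Q : 'M[int]_n, [/\ P \in unitmx, Q \in unitmx,
    map_mx (fun z : int => z%:~R) P *m A *m map_mx (fun z : int => z%:~R) Q
      = diag_mx (\row_i (d i)%:~R : 'rV[rat]_n),
    (forall i, 0 <= d i) &
    (forall i j : 'I_n, (i <= j)%N -> (d i %| d j)%Z)].

(* Main.v *)
Require Import Defs.
From HB Require Import structures.
From mathcomp Require Import all_boot all_order all_algebra all_field.
From Stdlib Require Classical.
Import Order.TTheory GRing.Theory Num.Theory.
Local Open Scope ring_scope.

Notation mapz := (map_mx (fun z : int => (z%:~R : rat))).

Lemma core n (P Q M N : 'M[int]_n) (A : 'M[rat]_n) (d : 'I_n -> int) :
  mapz P *m A *m mapz Q = diag_mx (\row_i (d i)%:~R : 'rV[rat]_n) ->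
  Q \in unitmx -> A *m mapz M = mapz N ->
  forall i j, (P *m N) i j = d i * (invmx Q *m M) i j.
Proof.
move=> HD HQ HM i j.
apply: (@intr_inj rat _ _).
have -> : ((P *m N) i j)%:~R = (mapz (P *m N)) i j :> rat.
  by rewrite [RHS]mxE.
rewrite map_mxM -HM.
have E : mapz M = mapz Q *m mapz (invmx Q *m M).
  by rewrite map_mxM mulmxA -map_mxM mulmxV // map_mx1 mul1mx.
rewrite E !mulmxA HD mul_diag_mx !mxE rmorphM /=.
done.
Qed.
Arguments core {n P Q M N A d}.

Lemma dvd_row_unit {n} {P : 'M[int]_n} (i : 'I_n) {d m : int} :
  P \in unitmx -> (forall j, (d %| P i j * m)%Z) -> (d %| m)%Z.
Proof.
move=> HP Hd.
have H1 : (d %| \det P * m)%Z.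
  rewrite (expand_det_row _ i) mulr_suml; apply: rpred_sum => j _.
  by rewrite mulrAC; apply: dvdz_mulr.
rewrite unitmxE in HP.
by rewrite -(mulKr HP m); apply: dvdz_mull.
Qed.

Lemma coordE (K : fieldExtType rat) n (e : 'I_n -> K) k i :
  free [tuple e l | l < n] -> coord [tuple e l | l < n] k (e i) = (i == k)%:R.
Proof.
move=> Hf; have := coord_free i k Hf.
by rewrite -tnth_nth tnth_mktuple.
Qed.

Lemma coord_zsum (K : fieldExtType rat) n (e : 'I_n -> K) (z : 'I_n -> int) k :
  free [tuple e l | l < n] ->
  coord [tuple e l | l < n] k (\sum_l (z l)%:~R * e l) = (z k)%:~R.
Proof.
move=> Hf; rewrite linear_sum (bigD1 k) //= big1 ?addr0.
  by rewrite mulrzl -scaler_int linearZ /= coordE // eqxx mulr1.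
by move=> l /negPf Hl; rewrite mulrzl -scaler_int linearZ /= coordE // Hl mulr0.
Qed.

Definition Mrow {K : fieldExtType rat} {r} (e : 'I_(r.+2) -> K) (u : 'I_(r.+1) -> K) (h' y : K)
  : 'M[rat]_(r.+2) :=
  \matrix_(i, k) coord [tuple e l | l < r.+2] k
     (if unlift ord_max i is Some j then u j * h' else y).

Lemma aform_det (K : fieldExtType rat) r (e : 'I_(r.+2) -> K) u h' c y :
  aform e u h' c y = \det (Mrow e u h' y) / (lam c)%:~R.
Proof. by []. Qed.

Lemma aformE (K : fieldExtType rat) r (e : 'I_(r.+2) -> K) u h' c y :
  aform e u h' c y = \sum_k coord [tuple e l | l < r.+2] k y *
     (cofactor (Mrow e u h' 0) ord_max k / (lam c)%:~R).
Proof.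
rewrite aform_det (expand_det_row _ ord_max) mulr_suml.
apply: eq_bigr => k _; rewrite /cofactor !mulrA.
have -> : Mrow e u h' y ord_max k = coord [tuple e l | l < r.+2] k y.
  by rewrite mxE unlift_none.
do 3 f_equal.
by apply/matrixP => i j; rewrite !mxE liftK.
Qed.

Lemma aformD (K : fieldExtType rat) r (e : 'I_(r.+2) -> K) u h' c y z :
  aform e u h' c (y + z) = aform e u h' c y + aform e u h' c z.
Proof.
rewrite !aformE -big_split /=; apply: eq_bigr => k _.
by rewrite linearD /= mulrDl.
Qed.

Lemma aform0 (K : fieldExtType rat) r (e : 'I_(r.+2) -> K) u h' c :
  aform e u h' c 0 = 0.
Proof.
rewrite !aformE big1 // => k _; by rewrite linear0 mul0r.
Qed.

Lemma aformZ (K : fieldExtType rat) r (e : 'I_(r.+2) -> K) u h' c (a : rat) y :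
  aform e u h' c (a *: y) = a * aform e u h' c y.
Proof.
rewrite !aformE mulr_sumr; apply: eq_bigr => k _.
by rewrite linearZ /= -mulrA.
Qed.

Lemma aform_sum (K : fieldExtType rat) r (e : 'I_(r.+2) -> K) u h' c I (s : seq I) (P : pred I) F :
  aform e u h' c (\sum_(i <- s | P i) F i) = \sum_(i <- s | P i) aform e u h' c (F i).
Proof. by apply: big_morph; [exact: aformD | exact: aform0]. Qed.

Lemma aform_comb (K : fieldExtType rat) r (e : 'I_(r.+2) -> K) u h' c v (z : 'I_(r.+2) -> int) :
  aform e u h' c (v * \sum_l (z l)%:~R * e l) = \sum_l (z l)%:~R * aform e u h' c (v * e l).
Proof.
rewrite mulr_sumr aform_sum; apply: eq_bigr => l _.
by rewrite mulrzl mulrzAr -scaler_int aformZ.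
Qed.

Lemma aform_uh (K : fieldExtType rat) r (e : 'I_(r.+2) -> K) u h' c j :
  aform e u h' c (u j * h') = 0.
Proof.
rewrite aform_det (determinant_alternate (i1 := lift ord_max j) (i2 := ord_max)).
- by rewrite mul0r.
- by rewrite eq_sym neq_lift.
by move=> k; rewrite !mxE liftK unlift_none.
Qed.

Lemma span_e (K : fieldExtType rat) r (e : 'I_(r.+2) -> K) :
  \dim {: K} = r.+2 -> free [tuple e l | l < r.+2] ->
  forall y, y = \sum_k coord [tuple e l | l < r.+2] k y *: e k.
Proof.
move=> Hdim Hf y.
have Hsp : <<[tuple e l | l < r.+2]>>%VS = fullv.
  apply/eqP; rewrite eqEdim subvf /= Hdim.
  by move: Hf => /eqP ->; rewrite size_tuple.
have Hy : y \in <<[tuple e l | l < r.+2]>>%VS by rewrite Hsp memvf.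
rewrite {1}(coord_span Hy); apply: eq_bigr => k _.
by rewrite -tnth_nth tnth_mktuple.
Qed.

Lemma coord_uh (K : fieldExtType rat) r (e : 'I_(r.+2) -> K) (u : 'I_(r.+1) -> K) h' (c : 'I_(r.+1) -> 'I_(r.+2) -> int) (j : 'I_(r.+1)) k :
  free [tuple e l | l < r.+2] ->
  u j * h' = \sum_(k < r.+2 | (k <= j)%N) (c j k)%:~R * e k ->
  coord [tuple e l | l < r.+2] k (u j * h') = (if (k <= j)%N then c j k else 0)%:~R.
Proof.
move=> Hf ->.
rewrite (_ : \sum_(k < r.+2 | (k <= j)%N) (c j k)%:~R * e k =
   \sum_(k < r.+2) ((if (k <= j)%N then c j k else 0)%:~R * e k)); first exact: coord_zsum.
rewrite big_mkcond; apply: eq_bigr => l _.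
by case: ifP => // _; rewrite mul0r.
Qed.
Arguments coord_uh {K r e u h' c j k}.

Lemma aform_emax (K : fieldExtType rat) r (e : 'I_(r.+2) -> K) u h' c :
  free [tuple e l | l < r.+2] ->
  (forall j : 'I_(r.+1),
     u j * h' = \sum_(k < r.+2 | (k <= j)%N) (c j k)%:~R * e k) ->
  (forall j : 'I_(r.+1), 0 < c j (widen_ord (leqnSn _) j)) ->
  aform e u h' c (e ord_max) != 0.
Proof.
move=> Hf Htri Hc.
rewrite aformE (bigD1 ord_max) //= big1 ?addr0; last first.
  by move=> k /negPf Hk; rewrite coordE // eq_sym Hk mul0r.
rewrite coordE // eqxx mul1r /cofactor.
have Hlam : (lam c)%:~R != 0 :> rat.
  rewrite intr_eq0 /lam; apply/lt0r_neq0; apply: prodr_gt0 => j _; exact: Hc.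
rewrite mulf_neq0 ?invr_eq0 // mulf_neq0 ?signr_eq0 //.
rewrite det_trig; last first.
  apply/is_trig_mxP => i j Hij; rewrite !mxE liftK (coord_uh Hf (Htri i)).
  by rewrite lift_max leqNgt Hij.
rewrite prodf_seq_neq0; apply/allP => j _ /=.
rewrite !mxE liftK (coord_uh Hf (Htri j)) lift_max leqnn intr_eq0.
have -> : lift ord_max j = widen_ord (leqnSn _) j by apply: val_inj; rewrite /= /bump leqNgt ltn_ord.
by apply/lt0r_neq0; exact: Hc.
Qed.
Arguments aform_emax {K r e u h' c}.
Arguments span_e {K r e}.

Lemma Amat_unit (K : fieldExtType rat) r (e : 'I_(r.+2) -> K) u h' c :
  \dim {: K} = r.+2 ->
  free [tuple e l | l < r.+2] -> free [tuple u j | j < r.+1] -> e ord0 = h' ->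
  (forall j : 'I_(r.+1),
     u j * h' = \sum_(k < r.+2 | (k <= j)%N) (c j k)%:~R * e k) ->
  (forall j : 'I_(r.+1), 0 < c j (widen_ord (leqnSn _) j)) ->
  Amat e u h' c \in unitmx.
Proof.
move=> Hdim Hf Hu He0 Htri Hc.
rewrite unitmxE unitfE; apply/negP => /det0P [x xnz xA].
pose w := \sum_j x 0 j *: u j.
have wnz : w != 0.
  apply: contra xnz => /eqP w0; apply/eqP/rowP => j; rewrite mxE.
  move/freeP: Hu => /(_ (fun j => x 0 j)); apply => //.
  by rewrite -[RHS]w0; apply: eq_bigr => i _; rewrite -tnth_nth tnth_mktuple.
have Hw : forall k, aform e u h' c (w * e k) = 0.
  move=> k; rewrite /w mulr_suml aform_sum.
  under eq_bigr => j _ do rewrite -scalerAl aformZ.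
  case: (unliftP ord0 k) => [k'|] ->.
    move/rowP: xA => /(_ k'); rewrite !mxE => H; rewrite -[RHS]H. apply: eq_big => // j _. by rewrite mxE.
  by apply: big1 => j _; rewrite He0 aform_uh mulr0.
have := aform_emax Hf Htri Hc; apply/negP; rewrite negbK.
rewrite -[e ord_max](mulVKf wnz) [X in w * X](span_e Hdim Hf (w^-1 * e ord_max)).
rewrite mulr_sumr aform_sum big1 // => k _.
by rewrite -scalerAr aformZ Hw mulr0.
Qed.

Theorem lemma12
  (K : fieldExtType rat) (r : nat)
  (sigma : 'I_(r.+2) -> {rmorphism K -> algC})
  (f b a : kset K) (q N : nat) (h : K)
  (u : 'I_(r.+1) -> K) (m : nat) (h' : K) (e : 'I_(r.+2) -> K)
  (c : 'I_(r.+1) -> 'I_(r.+2) -> int)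
  (Ad : 'I_(r.+1) -> int) :
  \dim {: K} = r.+2 ->
  one_complex_pair sigma ->
  int_ideal f -> ~ (forall x, OK x -> f x) ->
  (0 < q)%N -> (forall z : int, f z%:~R <-> (q%:Z %| z)%Z) ->
  int_ideal b -> ideal_coprime b f ->
  let L := set_mul f (set_inv b) in
  int_ideal a -> ideal_coprime a (set_mul f b) ->
  cyclic_quot (set_mul (set_inv a) L) L ->
  ideal_norm a N ->
  admissible L q N a h ->
  u ord0 = 1 ->
  (forall j, j != ord0 -> unit_plus_f sigma f (u j)) ->
  free [tuple u j | j < r.+1] ->
  (0 < m)%N -> primitive_in L h' -> h = m%:R * h' ->
  zbasis L e -> e ord0 = h' -> positive_basis sigma e ->
  (forall j : 'I_(r.+1),
     u j * h' = \sum_(k < r.+2 | (k <= j)%N) (c j k)%:~R * e k) ->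
  (forall j : 'I_(r.+1), 0 < c j (widen_ord (leqnSn _) j)) ->
  let A := Amat e u h' c in
  elem_divisors A Ad ->
  let t := Ad ord_max in
  let B := (t%:~R : rat) *: invmx A in
  let alpha := fun j : 'I_(r.+1) =>
    \sum_(i < r.+1) B i j *: e (lift ord0 i) in
  (forall (n : int) (B' : 'M[int]_(r.+1)),
     A *m map_mx (fun z : int => z%:~R) B' = (n%:~R : rat)%:M -> (t %| n)%Z) /\
  (forall (n : int) (alpha' : 'I_(r.+1) -> K), 0 < n ->
     (forall j, L (alpha' j)) ->
     (forall j k : 'I_(r.+1),
        aform e u h' c (u k * alpha' j) = if j == k then n%:~R else 0) ->
     (t %| n)%Z) /\
  (forall p : nat, prime p ->
     exists j : 'I_(r.+1), forall n' : int,
       ~ (exists x, L x /\ alpha j - n'%:~R * h' = p%:R * x)).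
move=> Hdim _ _ _ _ _ _ _ L _ _ _ _ _ Hu0 _ Hu _ Hh' _ Hzb He0 _ Htri Hc A
  [P [Q [HP HQ HD _ _]]] t B alpha.
have Hfe := Hzb.1.
pose E := [tuple e l | l < r.+2].
have part1 : forall (n : int) (B' : 'M[int]_(r.+1)),
    A *m mapz B' = (n%:~R : rat)%:M -> (t %| n)%Z.
  move=> n B' HB.
  have HB2 : A *m mapz B' = mapz (n%:M) by rewrite HB map_scalar_mx.
  have Hco := core HD HQ HB2.
  apply: (dvd_row_unit ord_max HP) => j.
  have := Hco ord_max j; rewrite mul_mx_scalar mxE mulrC => ->.
  exact: dvdz_mulr.
split; first exact: part1.
split.
  move=> n alpha' n0 HL Ha.
  apply: (part1 n (\matrix_(i, j) numq (coord E (lift ord0 i) (alpha' j)))).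
  apply/matrixP => k j; rewrite !mxE.
  have [z Hz] := (Hzb.2 _).1 (HL j).
  have E1 : aform e u h' c (u k * alpha' j) = n%:~R *+ (k == j).
    by rewrite Ha eq_sym; case: eqP.
  rewrite -E1 Hz aform_comb [RHS]big_ord_recl He0 aform_uh mulr0 add0r.
  apply: eq_bigr => i _; rewrite !mxE Hz coord_zsum // numq_int mulrC.
  by [].
move=> p Hp.
apply: Classical_Prop.NNPP => Hn.
have H : forall j, exists n' : int, exists x, L x /\ alpha j - n'%:~R * h' = p%:R * x.
  move=> j; apply: Classical_Prop.NNPP => Hj; apply: Hn; exists j => n' Hx.
  by apply: Hj; exists n'.
have Hp0 : p%:R != 0 :> rat by rewrite pnatr_eq0 -lt0n prime_gt0.
have HB : forall i j, B i j = p%:R * (numq (B i j / p%:R))%:~R.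
  move=> i j; have [n' [x [Lx Hx]]] := H j.
  have [z Hz] := (Hzb.2 x).1 Lx.
  have : coord E (lift ord0 i) (alpha j - n'%:~R * h') = coord E (lift ord0 i) (p%:R * x)
    by rewrite Hx.
  rewrite linearB /= -He0 mulrzl -scaler_int linearZ /= coordE //.
  rewrite (negbTE (neq_lift _ _)) mulr0 subr0.
  rewrite mulr_natl raddfMn /= Hz coord_zsum //.
  rewrite /alpha linear_sum /= (bigD1 i) //= big1 ?addr0; last first.
    move=> i' Hi'; rewrite linearZ /= coordE // (inj_eq (@lift_inj _ ord0)).
    by rewrite (negbTE Hi') mulr0.
  rewrite linearZ /= coordE // eqxx mulr1 => ->.
  have E2 : forall y : rat, y *+ p / p%:R = y by move=> y; rewrite -(mulr_natr y p) mulfK.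
  by rewrite E2 numq_int mulr_natl.
have HAu : A \in unitmx by apply: Amat_unit.
have Ht0 : t != 0.
  apply/eqP => t0.
  have Hdet := congr1 determinant HD.
  rewrite det_diag (bigD1 ord_max) //= !mxE -/t t0 mul0r !det_mulmx !det_map_mx in Hdet.
  move/eqP: Hdet; apply/negP; apply: mulf_neq0; first apply: mulf_neq0.
  - by rewrite intr_eq0; move: HP; rewrite unitmxE; apply: contraTneq => ->; rewrite unitr0.
  - by move: HAu; rewrite unitmxE unitfE.
  - by rewrite intr_eq0; move: HQ; rewrite unitmxE; apply: contraTneq => ->; rewrite unitr0.
pose Z := \matrix_(i, j) numq (B i j / p%:R).
have HAB : A *m mapz (p%:Z *: Z) = mapz (t%:M).
  have -> : mapz (p%:Z *: Z) = B.
    apply/matrixP => i j; rewrite !mxE rmorphM /=; move: (HB i j); rewrite /B mxE => E3; exact: (esym E3).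
  by rewrite /B -scalemxAr mulmxV // map_scalar_mx scalemx1.
have Hdv : forall j, (p%:Z %| P ord_max j * 1)%Z.
  move=> j; have := core HD HQ HAB ord_max j.
  rewrite mul_mx_scalar -scalemxAr !mxE mulr1 => /(mulfI Ht0) ->.
  exact: dvdz_mulr.
have := dvd_row_unit ord_max HP Hdv; rewrite dvdz1 /= => /eqP p1.
by move: Hp; rewrite p1.
Qed.
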